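(* Let $1\le i,j,k,l\le n$ with $i<j$, $k<l$, $i\le k$. Then in ${\boldsymbol U}_{v}(\mathfrak q_n)$: \[ \mathsf E_{i,j}\mathsf E_{k,l}=\begin{cases}\mathsf E_{k,l}\mathsf E_{i,j} & (i<j<k<l\text{ or } i<k<l<j),\\ v^{-1}\mathsf E_{k,l}\mathsf E_{i,j}-\mathsf E_{i,l} & (i<j=k<l),\\ v\,\mathsf E_{k,l}\mathsf E_{i,j} & (i=k<j<l\text{ or } i<k<j=l),\\ \mathsf E_{k,l}\mathsf E_{i,j}+(v-v^{-1})\mathsf E_{i,l}\mathsf E_{k,j} & (i<k<j<l).\end{cases} \]
   Context: Let $v$ be an indeterminate. The quantum queer superalgebra ${\boldsymbol U}_{v}(\mathfrak q_n)$ is the associative superalgebra over $\mathbb Q(v)$ generated by even generators $\mathsf K_i,\mathsf K_i^{-1}$ ($1\le i\le n$), $\mathsf E_j,\mathsf F_j$ ($1\le j\le n-1$) and odd generators $\mathsf K_{\bar i}$ ($1\le i\le n$), $\mathsf E_{\bar j},\mathsf F_{\bar j}$ ($1\le j\le n-1$), subject to the following relations (indices are taken only where they make sense), where $(\epsilon_i,\alpha_j)=\delta_{i,j}-\delta_{i,j+1}$: (QQ1) $\mathsf K_i\mathsf K_i^{-1}=\mathsf K_i^{-1}\mathsf K_i=1$, $\mathsf K_i\mathsf K_j=\mathsf K_j\mathsf K_i$, $\mathsf K_i\mathsf K_{\bar j}=\mathsf K_{\bar j}\mathsf K_i$, $\mathsf K_{\bar i}\mathsf K_{\bar j}+\mathsf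 K_{\bar j}\mathsf K_{\bar i}=2\delta_{i,j}\frac{\mathsf K_i^2-\mathsf K_i^{-2}}{v^2-v^{-2}}$. (QQ2) $\mathsf K_i\mathsf E_j=v^{(\epsilon_i,\alpha_j)}\mathsf E_j\mathsf K_i$, $\mathsf K_i\mathsf E_{\bar j}=v^{(\epsilon_i,\alpha_j)}\mathsf E_{\bar j}\mathsf K_i$, $\mathsf K_i\mathsf F_j=v^{-(\epsilon_i,\alpha_j)}\mathsf F_j\mathsf K_i$, $\mathsf K_i\mathsf F_{\bar j}=v^{-(\epsilon_i,\alpha_j)}\mathsf F_{\bar j}\mathsf K_i$. (QQ3) $\mathsf K_{\bar i}\mathsf E_i-v\mathsf E_i\mathsf K_{\bar i}=\mathsf E_{\bar i}\mathsf K_i^{-1}$, $v\mathsf K_{\bar i}\mathsf E_{i-1}-\mathsf E_{i-1}\mathsf K_{\bar i}=-\mathsf K_i^{-1}\mathsf E_{\overline{i-1}}$, $\mathsf K_{\bar i}\mathsf F_i-v\mathsf F_i\mathsf K_{\bar i}=-\mathsf F_{\bar i}\mathsf K_i$, $v\mathsf K_{\bar i}\mathsf F_{i-1}-\mathsf F_{i-1}\mathsf K_{\bar i}=\mathsf K_i\mathsf F_{\overline{i-1}}$, $\mathsf K_{\bar i}\mathsf E_{\bar i}+v\mathsf E_{\bar i}\mathsf K_{\bar i}=\mathsf E_i\mathsf K_i^{-1}$, $v\mathsf K_{\bar i}\mathsf E_{\overline{i-1}}+\mathsf E_{\overline{i-1}}\mathsf K_{\bar i}=\mathsf K_i^{-1}\mathsf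 E_{i-1}$, $\mathsf K_{\bar i}\mathsf F_{\bar i}+v\mathsf F_{\bar i}\mathsf K_{\bar i}=\mathsf F_i\mathsf K_i$, $v\mathsf K_{\bar i}\mathsf F_{\overline{i-1}}+\mathsf F_{\overline{i-1}}\mathsf K_{\bar i}=\mathsf K_i\mathsf F_{i-1}$, and for $j\ne i,i-1$: $\mathsf K_{\bar i}\mathsf E_j=\mathsf E_j\mathsf K_{\bar i}$, $\mathsf K_{\bar i}\mathsf F_j=\mathsf F_j\mathsf K_{\bar i}$, $\mathsf K_{\bar i}\mathsf E_{\bar j}=-\mathsf E_{\bar j}\mathsf K_{\bar i}$, $\mathsf K_{\bar i}\mathsf F_{\bar j}=-\mathsf F_{\bar j}\mathsf K_{\bar i}$. (QQ4) $\mathsf E_i\mathsf F_j-\mathsf F_j\mathsf E_i=\delta_{i,j}\frac{\mathsf K_i\mathsf K_{i+1}^{-1}-\mathsf K_i^{-1}\mathsf K_{i+1}}{v-v^{-1}}$, $\mathsf E_{\bar i}\mathsf F_{\bar j}+\mathsf F_{\bar j}\mathsf E_{\bar i}=\delta_{i,j}\big(\frac{\mathsf K_i\mathsf K_{i+1}-\mathsf K_i^{-1}\mathsf K_{i+1}^{-1}}{v-v^{-1}}+(v-v^{-1})\mathsf K_{\bar i}\mathsf K_{\overline{i+1}}\big)$, $\mathsf E_i\mathsf F_{\bar j}-\mathsf F_{\bar j}\mathsf E_i=\delta_{i,j}(\mathsf K_{i+1}^{-1}\mathsf K_{\bar i}-\mathsf K_{\overline{i+1}}\mathsf K_i^{-1})$,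 $\mathsf E_{\bar i}\mathsf F_j-\mathsf F_j\mathsf E_{\bar i}=\delta_{i,j}(\mathsf K_{i+1}\mathsf K_{\bar i}-\mathsf K_{\overline{i+1}}\mathsf K_i)$. (QQ5) $\mathsf E_{\bar i}^2=-\frac{v-v^{-1}}{v+v^{-1}}\mathsf E_i^2$, $\mathsf F_{\bar i}^2=\frac{v-v^{-1}}{v+v^{-1}}\mathsf F_i^2$; for $|i-j|\ne1$: $\mathsf E_i\mathsf E_{\bar j}=\mathsf E_{\bar j}\mathsf E_i$, $\mathsf F_i\mathsf F_{\bar j}=\mathsf F_{\bar j}\mathsf F_i$; for $|i-j|>1$: $\mathsf E_i\mathsf E_j=\mathsf E_j\mathsf E_i$, $\mathsf F_i\mathsf F_j=\mathsf F_j\mathsf F_i$, $\mathsf E_{\bar i}\mathsf E_{\bar j}=-\mathsf E_{\bar j}\mathsf E_{\bar i}$, $\mathsf F_{\bar i}\mathsf F_{\bar j}=-\mathsf F_{\bar j}\mathsf F_{\bar i}$; $\mathsf E_i\mathsf E_{i+1}-v\mathsf E_{i+1}\mathsf E_i=\mathsf E_{\bar i}\mathsf E_{\overline{i+1}}+v\mathsf E_{\overline{i+1}}\mathsf E_{\bar i}$, $\mathsf E_i\mathsf E_{\overline{i+1}}-v\mathsf E_{\overline{i+1}}\mathsf E_i=\mathsf E_{\bar i}\mathsf E_{i+1}-v\mathsf E_{i+1}\mathsf E_{\bar i}$, $\mathsf F_i\mathsf F_{i+1}-v\mathsf F_{i+1}\mathsf F_i=-(\mathsf F_{\bar i}\mathsf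 F_{\overline{i+1}}+v\mathsf F_{\overline{i+1}}\mathsf F_{\bar i})$, $\mathsf F_i\mathsf F_{\overline{i+1}}-v\mathsf F_{\overline{i+1}}\mathsf F_i=\mathsf F_{\bar i}\mathsf F_{i+1}-v\mathsf F_{i+1}\mathsf F_{\bar i}$. (QQ6) for $|i-j|=1$: $\mathsf E_i^2X-(v+v^{-1})\mathsf E_iX\mathsf E_i+X\mathsf E_i^2=0$ for $X\in\{\mathsf E_j,\mathsf E_{\bar j}\}$ and $\mathsf F_i^2Y-(v+v^{-1})\mathsf F_iY\mathsf F_i+Y\mathsf F_i^2=0$ for $Y\in\{\mathsf F_j,\mathsf F_{\bar j}\}$. Quantum root vectors: for $1\le i\le n-1$ put $\mathsf E_{i,i+1}=\mathsf E_i$, $\overline{\mathsf E}_{i,i+1}=\mathsf E_{\bar i}$, $\mathsf E_{i+1,i}=\mathsf F_i$, $\overline{\mathsf E}_{i+1,i}=\mathsf F_{\bar i}$, and recursively for $i+1<j\le n$: $\mathsf E_{i,j}=-\mathsf E_{i,j-1}\mathsf E_{j-1}+v^{-1}\mathsf E_{j-1}\mathsf E_{i,j-1}$, $\overline{\mathsf E}_{i,j}=-\mathsf E_{i,j-1}\mathsf E_{\overline{j-1}}+v^{-1}\mathsf E_{\overline{j-1}}\mathsf E_{i,j-1}$, $\mathsf E_{j,i}=-\mathsf F_{j-1}\mathsf E_{j-1,i}+v\mathsf E_{j-1,i}\mathsf F_{j-1}$, $\overline{\mathsf E}_{j,i}=-\mathsf F_{\overline{j-1}}\mathsf E_{j-1,i}+v\mathsf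 E_{j-1,i}\mathsf F_{\overline{j-1}}$. *)

(* Defs.v *)
From HB Require Import structures.
From mathcomp Require Import all_boot all_order all_algebra.
Set Implicit Arguments. Unset Strict Implicit. Unset Printing Implicit Defensive.
Import Order.TTheory GRing.Theory Num.Theory.
Local Open Scope ring_scope.

Definition Qv : fieldType := {fraction {poly rat}}.
Definition qv : Qv := FracField.tofrac ('X : {poly rat}).

(* (epsilon_i, alpha_j) = delta_{i,j} - delta_{i,j+1} *)
Definition epsal (i j : nat) : int := (i == j)%:R - (i == j.+1)%:R.

Section QQ.
Variable A : algType Qv.
Local Notation v := qv.

(* Indices: K_i, K_i^{-1}, K_{bar i} for 1 <= i <= n
   (functions K, Ki, Kb); E_j, F_j, E_{bar j}, F_{bar j} for 1 <= j <= n-1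
   (functions E, F, Eb, Fb).  Values outside these ranges are irrelevant. *)
Record qq_relations (n : nat) (K Ki Kb E F Eb Fb : nat -> A) : Prop := {
  qq1_KKi : forall i, (1 <= i <= n)%N -> K i * Ki i = 1 /\ Ki i * K i = 1;
  qq1_KK : forall i j, (1 <= i <= n)%N -> (1 <= j <= n)%N -> K i * K j = K j * K i;
  qq1_KKb : forall i j, (1 <= i <= n)%N -> (1 <= j <= n)%N -> K i * Kb j = Kb j * K i;
  qq1_KbKb_eq : forall i, (1 <= i <= n)%N ->
    Kb i * Kb i + Kb i * Kb i =
      2%:R *: ((v ^+ 2 - v ^- 2)^-1 *: (K i ^+ 2 - Ki i ^+ 2));
  qq1_KbKb_neq : forall i j, (1 <= i <= n)%N -> (1 <= j <= n)%N -> i != j ->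
    Kb i * Kb j + Kb j * Kb i = 0;
  qq2 : forall i j, (1 <= i <= n)%N -> (1 <= j < n)%N ->
    [/\ K i * E j = v ^ (epsal i j) *: (E j * K i),
        K i * Eb j = v ^ (epsal i j) *: (Eb j * K i),
        K i * F j = v ^ (- epsal i j) *: (F j * K i)
      & K i * Fb j = v ^ (- epsal i j) *: (Fb j * K i)];
  qq3_same : forall i, (1 <= i < n)%N ->
    [/\ Kb i * E i - v *: (E i * Kb i) = Eb i * Ki i,
        Kb i * F i - v *: (F i * Kb i) = - (Fb i * K i),
        Kb i * Eb i + v *: (Eb i * Kb i) = E i * Ki i
      & Kb i * Fb i + v *: (Fb i * Kb i) = F i * K i];
  qq3_prev : forall i, (2 <= i <= n)%N ->
    [/\ v *: (Kb i * E i.-1) - E i.-1 * Kb i = - (Ki i * Eb i.-1),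
        v *: (Kb i * F i.-1) - F i.-1 * Kb i = K i * Fb i.-1,
        v *: (Kb i * Eb i.-1) + Eb i.-1 * Kb i = Ki i * E i.-1
      & v *: (Kb i * Fb i.-1) + Fb i.-1 * Kb i = K i * F i.-1];
  qq3_other : forall i j, (1 <= i <= n)%N -> (1 <= j < n)%N -> j != i -> j.+1 != i ->
    [/\ Kb i * E j = E j * Kb i,
        Kb i * F j = F j * Kb i,
        Kb i * Eb j = - (Eb j * Kb i)
      & Kb i * Fb j = - (Fb j * Kb i)];
  qq4_eq : forall i, (1 <= i < n)%N ->
    [/\ E i * F i - F i * E i =
          (v - v^-1)^-1 *: (K i * Ki i.+1 - Ki i * K i.+1),
        Eb i * Fb i + Fb i * Eb i =
          (v - v^-1)^-1 *: (K i * K i.+1 - Ki i * Ki i.+1)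
          + (v - v^-1) *: (Kb i * Kb i.+1),
        E i * Fb i - Fb i * E i = Ki i.+1 * Kb i - Kb i.+1 * Ki i
      & Eb i * F i - F i * Eb i = K i.+1 * Kb i - Kb i.+1 * K i];
  qq4_neq : forall i j, (1 <= i < n)%N -> (1 <= j < n)%N -> i != j ->
    [/\ E i * F j - F j * E i = 0,
        Eb i * Fb j + Fb j * Eb i = 0,
        E i * Fb j - Fb j * E i = 0
      & Eb i * F j - F j * Eb i = 0];
  qq5_sq : forall i, (1 <= i < n)%N ->
    Eb i ^+ 2 = - ((v - v^-1) / (v + v^-1)) *: E i ^+ 2 /\
    Fb i ^+ 2 = ((v - v^-1) / (v + v^-1)) *: F i ^+ 2;
  qq5_not_adj : forall i j, (1 <= i < n)%N -> (1 <= j < n)%N ->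
    i != j.+1 -> j != i.+1 ->
    E i * Eb j = Eb j * E i /\ F i * Fb j = Fb j * F i;
  qq5_far : forall i j, (1 <= i < n)%N -> (1 <= j < n)%N -> ((i.+1 < j) || (j.+1 < i))%N ->
    [/\ E i * E j = E j * E i,
        F i * F j = F j * F i,
        Eb i * Eb j = - (Eb j * Eb i)
      & Fb i * Fb j = - (Fb j * Fb i)];
  qq5_adj : forall i, (1 <= i)%N -> (i.+1 < n)%N ->
    [/\ E i * E i.+1 - v *: (E i.+1 * E i) = Eb i * Eb i.+1 + v *: (Eb i.+1 * Eb i),
        E i * Eb i.+1 - v *: (Eb i.+1 * E i) = Eb i * E i.+1 - v *: (E i.+1 * Eb i),
        F i * F i.+1 - v *: (F i.+1 * F i) = - (Fb i * Fb i.+1 + v *: (Fb i.+1 * Fb i))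
      & F i * Fb i.+1 - v *: (Fb i.+1 * F i) = Fb i * F i.+1 - v *: (F i.+1 * Fb i)];
  qq6 : forall i j, (1 <= i < n)%N -> (1 <= j < n)%N -> (i == j.+1) || (j == i.+1) ->
    (forall X, (X = E j \/ X = Eb j) ->
       E i ^+ 2 * X - (v + v^-1) *: (E i * X * E i) + X * E i ^+ 2 = 0) /\
    (forall Y, (Y = F j \/ Y = Fb j) ->
       F i ^+ 2 * Y - (v + v^-1) *: (F i * Y * F i) + Y * F i ^+ 2 = 0)
}.

(* Quantum root vectors E_{i,i+1+d} (positive part, even):
   E_{i,i+1} = E_i,
   E_{i,j} = - E_{i,j-1} E_{j-1} + v^{-1} E_{j-1} E_{i,j-1}. *)
Fixpoint Eroot_aux (E : nat -> A) (i d : nat) : A :=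
  match d with
  | 0 => E i
  | d'.+1 => - (Eroot_aux E i d' * E (i + d').+1)
             + v^-1 *: (E (i + d').+1 * Eroot_aux E i d')
  end.

Definition Eroot (E : nat -> A) (i j : nat) : A := Eroot_aux E i (j - i).-1.

End QQ.

(* Main.v *)
Require Import Defs.
From HB Require Import structures.
From mathcomp Require Import all_boot all_order all_algebra.
From mathcomp Require Import ring zify.
Import Order.TTheory GRing.Theory Num.Theory.
Set Implicit Arguments. Unset Strict Implicit. Unset Printing Implicit Defensive.
Local Open Scope ring_scope.
Inductive lexpr (F : Type) := LAtom of nat | LAdd of lexpr F & lexpr F
  | LOpp of lexpr F | LScale of F & lexpr F | LZero.
Arguments LAtom {F}. Arguments LZero {F}.

Fixpoint leval (F : fieldType) (V : lmodType F) (env : seq V) (e : lexpr F) : V :=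
  match e with
  | LAtom k => nth 0 env k
  | LAdd a b => @leval F V env a + @leval F V env b
  | LOpp a => - @leval F V env a
  | LScale c a => c *: @leval F V env a
  | LZero => 0
  end.

Fixpoint lnorm (F : fieldType) (e : lexpr F) (i : nat) : F :=
  match e with
  | LAtom k => if Nat.eqb k i then 1 else 0
  | LAdd a b => @lnorm F a i + @lnorm F b i
  | LOpp a => - @lnorm F a i
  | LScale c a => c * @lnorm F a i
  | LZero => 0
  end.

Arguments leval {F V}. Arguments lnorm {F}.

Lemma leval_sum (F : fieldType) (V : lmodType F) (env : seq V) e :
  leval env e = \sum_(i < size env) lnorm e i *: nth 0 env i.
Proof.
elim: e => [k|a iha b ihb|a iha|c a iha|] /=.
- case: (ltnP k (size env)) => hk.
  + rewrite (bigD1 (Ordinal hk)) //= PeanoNat.Nat.eqb_refl scale1r big1 ?addr0 //.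
    move=> i /eqP hi; case: PeanoNat.Nat.eqb_spec => [e|]; last by rewrite scale0r.
    by case: hi; apply: val_inj => /=.
  + rewrite nth_default // big1 // => i _.
    case: PeanoNat.Nat.eqb_spec => [e|]; last by rewrite scale0r.
    by move: (ltn_ord i); rewrite -e ltnNge hk.
- by rewrite iha ihb -big_split /=; apply: eq_bigr => i _; rewrite scalerDl.
- by rewrite iha -sumrN; apply: eq_bigr => i _; rewrite scaleNr.
- by rewrite iha scaler_sumr; apply: eq_bigr => i _; rewrite scalerA.
- by rewrite big1 // => i _; rewrite scale0r.
Qed.

Lemma leval_eq (F : fieldType) (V : lmodType F) (env : seq V) l r :
  (forall i, (i < size env)%N -> lnorm l i = lnorm r i) -> leval env l = leval env r.
Proof.
by move=> h; rewrite !leval_sum; apply: eq_bigr => i _; rewrite h.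
Qed.

Definition conv_check (T : Type) (x y : T) (p : @eq T x y) := tt.

Ltac lmem x env :=
  match env with
  | nil => constr:(false)
  | cons ?y ?r => match constr:(tt) with _ => let _ := constr:(@conv_check _ x y (@Logic.eq_refl _ x)) in constr:(true) | _ => lmem x r end
  end.

Ltac lcollect t env :=
  match t with
  | @GRing.add _ ?a ?b => let e1 := lcollect a env in lcollect b e1
  | @GRing.opp _ ?a => lcollect a env
  | @GRing.scale _ _ ?c ?a => lcollect a env
  | @GRing.zero _ => env
  | _ => let m := lmem t env in
         match m with true => env | false => constr:(cons t env) end
  end.

Ltac lindex x env :=
  match env with
  | cons ?y ?r => match constr:(tt) with _ => let _ := constr:(@conv_check _ x y (@Logic.eq_refl _ x)) in constr:(0%N) | _ => let k := lindex x r in constr:(S k) end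
  end.

Ltac lreify F t env :=
  match t with
  | @GRing.add _ ?a ?b => let ra := lreify F a env in let rb := lreify F b env in
                          constr:(@LAdd F ra rb)
  | @GRing.opp _ ?a => let ra := lreify F a env in constr:(@LOpp F ra)
  | @GRing.scale _ _ ?c ?a => let ra := lreify F a env in constr:(@LScale F c ra)
  | @GRing.zero _ => constr:(@LZero F)
  | _ => let k := lindex t env in constr:(@LAtom F k)
  end.

Ltac lcase i hi := first [ by move: hi | case: i hi => [|i] hi; [simpl; first [ring | (field; done)] | lcase i hi] ].

Ltac lsolve_core F V :=
  match goal with
  | |- ?l = ?r =>
    let e0 := lcollect l (@nil V) in
    let e := lcollect r e0 in
    let rl := lreify F l e in
    let rr := lreify F r e in
    change (leval e rl = leval e rr);
    apply: leval_eq => /=;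
    let i := fresh "i" in let hi := fresh "hi" in
    move=> i hi; lcase i hi
  end.

Ltac lsolve F V := lsolve_core F V.

Ltac lsolve_g F :=
  match goal with
  | |- @eq ?V ?l ?r =>
    let e0 := lcollect l (@nil V) in
    let e := lcollect r e0 in
    let rl := lreify F l e in
    let rr := lreify F r e in
    change (leval e rl = leval e rr);
    apply: leval_eq => /=;
    let i := fresh "i" in let hi := fresh "hi" in
    move=> i hi; lcase i hi
  end.

Lemma scalerAl' (F : fieldType) (A : lalgType F) (k : F) (x y : A) : (k *: x) * y = k *: (x * y).
Proof. by rewrite scalerAl. Qed.
Lemma scalerAr' (F : fieldType) (A : algType F) (k : F) (x y : A) : x * (k *: y) = k *: (x * y).
Proof. by rewrite scalerAr. Qed.
Lemma ctxl (R : ringType) (x y a : R) : x * y = a -> forall p, p * x * y = p * a.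
Proof. by move=> h p; rewrite -mulrA h. Qed.

Ltac ncx := rewrite ?(mulrDl, mulrDr, mulrBl, mulrBr, mulNr, mulrN, opprK, mulrA, scalerAl', scalerAr').
Ltac wr h := rewrite ?h ?(ctxl h); ncx.

Definition fb (F : fieldType) (A : algType F) (v : F) (x y : A) : A :=
  - (x * y) + v^-1 *: (y * x).
Definition qc (F : fieldType) (A : algType F) (c : F) (x y : A) : Prop :=
  x * y = c *: (y * x).
Arguments fb {F A}. Arguments qc {F A}.

Lemma fbA (F : fieldType) (A : algType F) (v : F) (x y z : A) :
  x * z = z * x -> fb v (fb v x y) z = fb v x (fb v y z).
Proof.
move=> h; rewrite /fb; ncx; wr h; lsolve_g F.
Qed.

Lemma qc_fbl (F : fieldType) (A : algType F) (v c d : F) (x y z : A) :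
  qc c x y -> qc d x z -> qc (c * d) x (fb v y z).
Proof.
rewrite /qc /fb => hy hz; ncx; wr hy; wr hz; wr hy; lsolve_g F.
Qed.

Lemma qc_fbr (F : fieldType) (A : algType F) (v c d : F) (x y z : A) :
  qc c y x -> qc d z x -> qc (c * d) (fb v y z) x.
Proof.
rewrite /qc /fb => hy hz; ncx; wr hy; wr hz; wr hy; lsolve_g F.
Qed.

Lemma serre_l (F : fieldType) (A : algType F) (v : F) (x y : A) : v != 0 ->
  x * x * y - (v + v^-1) *: (x * y * x) + y * x * x = 0 -> qc v x (fb v x y).
Proof.
move=> hv hS.
have r : y * x * x = (v + v^-1) *: (x * y * x) - x * x * y.
  by apply/eqP; rewrite -subr_eq0 -[X in _ == X]hS; apply/eqP; lsolve_g F.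
rewrite /qc /fb; ncx; rewrite r; ncx; lsolve_g F.
Qed.

Lemma serre_r (F : fieldType) (A : algType F) (v : F) (x y : A) : v != 0 ->
  y * y * x - (v + v^-1) *: (y * x * y) + x * y * y = 0 -> qc v (fb v x y) y.
Proof.
move=> hv hS.
have r : x * y * y = (v + v^-1) *: (y * x * y) - y * y * x.
  by apply/eqP; rewrite -subr_eq0 -[X in _ == X]hS; apply/eqP; lsolve_g F.
rewrite /qc /fb; ncx; rewrite r; ncx; lsolve_g F.
Qed.

Lemma G4 (F : fieldType) (A : algType F) (v : F) (X Y Z W U T : A) :
  v != 0 -> 1 + v ^+ 2 != 0 ->
  W = fb v X Y -> U = fb v Y Z -> T = fb v W Z -> T = fb v X U ->
  qc v W Y -> qc v Y U ->
  Y * T = T * Y /\ W * U - U * W = (v - v^-1) *: (T * Y).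
Proof.
move=> hv hv2 hW hU hT1 hT2 hWY hYU.
have E1 : W * U - U * W = v *: (Y * T) - v^-1 *: (T * Y).
  rewrite hU hT1 /fb; ncx; wr hWY; lsolve_g F.
have E2 : Y * T - T * Y = - v *: (W * U - U * W) + (v * (v - v^-1)) *: (T * Y).
  rewrite hT2 hW /fb; ncx; wr hYU; lsolve_g F.
have E3 : (1 + v ^+ 2) *: (Y * T - T * Y) = 0.
  by rewrite scalerDl scale1r {1}E2 E1; lsolve_g F.
have E4 : Y * T = T * Y.
  move/eqP: E3; rewrite scaler_eq0 (negbTE hv2) /= subr_eq0 => /eqP //.
split=> //; rewrite E1 E4; lsolve_g F.
Qed.

Lemma G5 (F : fieldType) (A : algType F) (v : F) (P q U W T : A) :
  v != 0 -> qc v P W -> qc v P T -> W * U - U * W = (v - v^-1) *: (T * q) ->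
  T = fb v P U -> W = fb v P q -> qc v W T.
Proof.
move=> hv hPW hPT hWU hT hW.
have hWU' : W * U = U * W + (v - v^-1) *: (T * q) by rewrite -hWU addrC subrK.
have hWP : W * P = v^-1 *: (P * W) by rewrite hPW scalerA mulVf // scale1r.
rewrite /qc.
suff -> : W * T = v^-1 *: (fb v P U * W) + (v - v^-1) *: (T * fb v P q).
  by rewrite -hT -hW; lsolve_g F.
rewrite {1}hT /fb; ncx; wr hWU'; wr hWP; wr hWU'; wr hPT; lsolve_g F.
Qed.

Lemma G5' (F : fieldType) (A : algType F) (v : F) (Pr q U W T : A) :
  v != 0 -> qc v W Pr -> qc v T Pr -> U * W - W * U = (v - v^-1) *: (T * q) ->
  T = fb v U Pr -> W = fb v q Pr -> qc v T W.
Proof.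
move=> hv hWPr hTPr hUW hT hW.
have hUW' : U * W = W * U + (v - v^-1) *: (T * q) by rewrite -hUW addrC subrK.
have hPrW : Pr * W = v^-1 *: (W * Pr) by rewrite hWPr scalerA mulVf // scale1r.
have hPrT : Pr * T = v^-1 *: (T * Pr) by rewrite hTPr scalerA mulVf // scale1r.
have key : T * W = v^-1 *: (W * fb v U Pr) + (v^-1 * (v - v^-1)) *: (T * fb v q Pr).
  rewrite {1}hT /fb; ncx; wr hPrW; wr hUW'; wr hPrW; wr hPrT; lsolve_g F.
rewrite -hT -hW in key.
have g' : v^-1 *: (W * T) = v^-1 ^+ 2 *: (T * W).
  have -> : v^-1 *: (W * T) = T * W - (v^-1 * (v - v^-1)) *: (T * W)
    by rewrite {1}key addrK.
  lsolve_g F.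
rewrite /qc.
have h2 : T * W = v ^+ 2 *: (v^-1 ^+ 2 *: (T * W)) by lsolve_g F.
by rewrite {1}h2 -g'; lsolve_g F.
Qed.

Lemma qv_neq0 : qv != 0.
Proof. by rewrite /qv tofrac_eq0 polyX_eq0. Qed.

Lemma qv2_neq0 : 1 + qv ^+ 2 != 0.
Proof.
rewrite /qv -tofracXn -tofrac1 -tofracD tofrac_eq0.
apply/eqP=> /(congr1 (fun p : {poly rat} => p`_0)) /eqP.
by rewrite coefD coef1 coefXn coef0.
Qed.

Definition farP (A : algType Qv) (n : nat) (E : nat -> A) :=
  forall i j, (1 <= i < n)%N -> (1 <= j < n)%N -> (i.+1 < j)%N -> E i * E j = E j * E i.
Definition s1P (A : algType Qv) (n : nat) (E : nat -> A) :=
  forall a, (1 <= a)%N -> (a.+1 < n)%N -> qc qv (E a) (fb qv (E a) (E a.+1)).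
Definition s2P (A : algType Qv) (n : nat) (E : nat -> A) :=
  forall a, (1 <= a)%N -> (a.+1 < n)%N -> qc qv (fb qv (E a) (E a.+1)) (E a.+1).

Lemma qc1 (A : algType Qv) (x y : A) : qc 1 x y <-> x * y = y * x.
Proof. by rewrite /qc scale1r. Qed.

Lemma Rrec (A : algType Qv) (E : nat -> A) a b : (a < b)%N ->
  Eroot E a b.+1 = fb qv (Eroot E a b) (E b).
Proof.
move=> hab; have [d ->] : exists d, b = (a + d.+1)%N by exists (b - a).-1; lia.
rewrite /Eroot -addnS !addKn /= /fb addnS.
done.
Qed.

Lemma Rbase (A : algType Qv) (E : nat -> A) a : Eroot E a a.+1 = E a.
Proof. by rewrite /Eroot subSnn. Qed.

Lemma Far1 (A : algType Qv) n (E : nat -> A) : farP n E ->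
  forall a b c, (1 <= a)%N -> (a < b)%N -> (b <= n)%N -> (c < n)%N -> (b < c)%N ->
  E c * Eroot E a b = Eroot E a b * E c.
Proof.
move=> HF a b c ha; elim: b => [//|b IH] hab hbn hcn hbc.
case: (ltngtP a b) => [hlt | hgt | <-].
- rewrite Rrec //; apply/qc1; rewrite -[1](mulr1 1); apply: qc_fbl; apply/qc1.
    by apply: IH; lia.
  by symmetry; apply: HF; lia.
- lia.
- by rewrite Rbase; symmetry; apply: HF; lia.
Qed.

Lemma FarR (A : algType Qv) n (E : nat -> A) : farP n E ->
  forall a b c d, (1 <= a)%N -> (a < b)%N -> (b < c)%N -> (c < d)%N -> (d <= n)%N ->
  Eroot E a b * Eroot E c d = Eroot E c d * Eroot E a b.
Proof.
move=> HF a b c d ha hab hbc; elim: d => [//|d IH] hcd hdn.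
case: (ltngtP c d) => [hlt | hgt | <-].
- rewrite Rrec //; apply/qc1; rewrite -[1](mulr1 1); apply: qc_fbl; apply/qc1.
    by apply: IH; lia.
  by symmetry; apply: (Far1 HF); lia.
- lia.
- by rewrite Rbase; symmetry; apply: (Far1 HF); lia.
Qed.

Lemma Assoc (A : algType Qv) n (E : nat -> A) : farP n E ->
  forall a b c, (1 <= a)%N -> (a < b)%N -> (b < c)%N -> (c <= n)%N ->
  Eroot E a c = fb qv (Eroot E a b) (Eroot E b c).
Proof.
move=> HF a b c ha hab; elim: c => [//|c IH] hbc hcn.
case: (ltngtP b c) => [hlt | hgt | <-].
- rewrite Rrec; last lia.
  rewrite IH; [|lia|lia].
  rewrite fbA; last by symmetry; apply: (Far1 HF); lia.
  by rewrite -Rrec.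
- lia.
- by rewrite Rbase Rrec.
Qed.

Lemma P2 (A : algType Qv) n (E : nat -> A) : farP n E -> s1P n E ->
  forall a b, (1 <= a)%N -> (a.+2 <= b)%N -> (b <= n)%N -> qc qv (E a) (Eroot E a b).
Proof.
move=> HF HS1 a b ha; elim: b => [//|b IH] hab hbn.
case: (ltngtP a.+1 b) => [hlt | hgt | <-].
- rewrite Rrec; last lia.
  rewrite -[qv](mulr1 qv); apply: qc_fbl; first by apply: IH; lia.
  by apply/qc1; apply: HF; lia.
- lia.
- by rewrite Rrec // Rbase; apply: HS1; lia.
Qed.

Lemma P3 (A : algType Qv) n (E : nat -> A) : farP n E -> s2P n E ->
  forall d a b, (1 <= a)%N -> b = (a + d.+2)%N -> (b <= n)%N -> qc qv (Eroot E a b) (E b.-1).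
Proof.
move=> HF HS2; elim=> [|d IH] a b ha hb hbn.
- rewrite hb addn2 Rrec // Rbase /=; apply: HS2; lia.
- rewrite (Assoc HF (b:=a.+1)); [|lia|lia|lia|lia].
  rewrite Rbase -[qv](mul1r qv); apply: qc_fbr.
    by apply/qc1; apply: HF; lia.
  by apply: IH; lia.
Qed.

Lemma P3' (A : algType Qv) n (E : nat -> A) : farP n E -> s2P n E ->
  forall a b, (1 <= a)%N -> (a.+2 <= b)%N -> (b <= n)%N -> qc qv (Eroot E a b) (E b.-1).
Proof.
move=> HF HS2 a b ha hab hbn; apply: (P3 HF HS2 (d := (b - a.+2)%N)) => //; lia.
Qed.

Lemma H1 (A : algType Qv) n (E : nat -> A) : farP n E -> s1P n E -> s2P n E ->
  forall a b, (1 <= a)%N -> (a < b)%N -> (b < n)%N ->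
  qc qv (Eroot E a b) (Eroot E a b.+1).
Proof.
move=> HF HS1 HS2 a b ha; elim: b => [//|b IH] hab hbn.
case: (ltngtP a b) => [hlt | hgt | <-].
- have hW : Eroot E a b.+1 = fb qv (Eroot E a b) (E b) by rewrite Rrec.
  have hU : Eroot E b b.+2 = fb qv (E b) (E b.+1) by rewrite Rrec // Rbase.
  have hT1 : Eroot E a b.+2 = fb qv (Eroot E a b.+1) (E b.+1) by rewrite Rrec //; lia.
  have hT2 : Eroot E a b.+2 = fb qv (Eroot E a b) (Eroot E b b.+2).
    by rewrite (Assoc HF (b:=b)) //; lia.
  have hWq : qc qv (Eroot E a b.+1) (E b) by apply: (P3' HF HS2); lia.
  have hqU : qc qv (E b) (Eroot E b b.+2) by apply: (P2 HF HS1); lia.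
  have [_ hc] := G4 qv_neq0 qv2_neq0 hW hU hT1 hT2 hWq hqU.
  have hPW : qc qv (Eroot E a b) (Eroot E a b.+1) by apply: IH; lia.
  have hPT : qc qv (Eroot E a b) (Eroot E a b.+2).
    rewrite hT1 -[qv](mulr1 qv); apply: qc_fbl => //.
    by apply/qc1; symmetry; apply: (Far1 HF); lia.
  exact: (G5 qv_neq0 hPW hPT hc hT2 hW).
- lia.
- by rewrite Rbase; apply: (P2 HF HS1); lia.
Qed.

Lemma H2 (A : algType Qv) n (E : nat -> A) : farP n E -> s1P n E -> s2P n E ->
  forall d a b, (1 <= a)%N -> b = (a + d.+2)%N -> (b <= n)%N ->
  qc qv (Eroot E a b) (Eroot E a.+1 b).
Proof.
move=> HF HS1 HS2; elim=> [|d IH] a b ha hb hbn.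
- rewrite hb addn2 Rrec // !Rbase; apply: HS2; lia.
- have hW' : Eroot E a.+1 b = fb qv (E a.+1) (Eroot E a.+2 b).
    by rewrite (Assoc HF (b:=a.+2)) ?Rbase //; lia.
  have hU' : Eroot E a a.+2 = fb qv (E a) (E a.+1) by rewrite Rrec // Rbase.
  have hT1 : Eroot E a b = fb qv (Eroot E a a.+2) (Eroot E a.+2 b).
    by rewrite (Assoc HF (b:=a.+2)) //; lia.
  have hT2 : Eroot E a b = fb qv (E a) (Eroot E a.+1 b).
    by rewrite (Assoc HF (b:=a.+1)) ?Rbase //; lia.
  have hUq : qc qv (Eroot E a a.+2) (E a.+1) by rewrite hU'; apply: HS2; lia.
  have hqW : qc qv (E a.+1) (Eroot E a.+1 b) by apply: (P2 HF HS1); lia.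
  have [_ hc] := G4 qv_neq0 qv2_neq0 hU' hW' hT1 hT2 hUq hqW.
  have hWPr : qc qv (Eroot E a.+1 b) (Eroot E a.+2 b) by apply: IH; lia.
  have hTPr : qc qv (Eroot E a b) (Eroot E a.+2 b).
    rewrite hT2 -[qv](mul1r qv); apply: qc_fbr => //.
    apply/qc1; rewrite -Rbase; apply: (FarR HF); lia.
  exact: (G5' qv_neq0 hWPr hTPr hc hT1 hW').
Qed.

Lemma H2' (A : algType Qv) n (E : nat -> A) : farP n E -> s1P n E -> s2P n E ->
  forall a b, (1 <= a)%N -> (a.+2 <= b)%N -> (b <= n)%N ->
  qc qv (Eroot E a b) (Eroot E a.+1 b).
Proof.
move=> HF HS1 HS2 a b ha hab hbn; apply: (H2 HF HS1 HS2 (d := (b - a.+2)%N)) => //; lia.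
Qed.

Lemma C3a (A : algType Qv) n (E : nat -> A) : farP n E -> s1P n E -> s2P n E ->
  forall i j l, (1 <= i)%N -> (i < j)%N -> (j < l)%N -> (l <= n)%N ->
  qc qv (Eroot E i j) (Eroot E i l).
Proof.
move=> HF HS1 HS2 i j l hi hij hjl hln.
case: (ltngtP j.+1 l) => [hlt | hgt | <-].
- rewrite [Eroot E i l](Assoc HF (b:=j.+1)) //; last lia.
  rewrite -[qv](mulr1 qv); apply: qc_fbl; first by apply: (H1 HF HS1 HS2); lia.
  by apply/qc1; apply: (FarR HF); lia.
- lia.
- by apply: (H1 HF HS1 HS2); lia.
Qed.

Lemma C3b (A : algType Qv) n (E : nat -> A) : farP n E -> s1P n E -> s2P n E ->
  forall i k l, (1 <= i)%N -> (i < k)%N -> (k < l)%N -> (l <= n)%N ->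
  qc qv (Eroot E i l) (Eroot E k l).
Proof.
move=> HF HS1 HS2 i k l hi hik hkl hln.
case: (ltngtP i.+1 k) => [hlt | hgt | <-].
- rewrite [Eroot E i l](Assoc HF (b:=k.-1)); [|lia|lia|lia|lia].
  rewrite -[qv](mul1r qv); apply: qc_fbr.
    by apply/qc1; apply: (FarR HF); lia.
  have -> : k = k.-1.+1 by lia.
  by apply: (H2' HF HS1 HS2); lia.
- lia.
- by apply: (H2' HF HS1 HS2); lia.
Qed.

Theorem lemma2p8 (n : nat) (A : algType Qv) (K Ki Kb E F Eb Fb : nat -> A) :
  qq_relations n K Ki Kb E F Eb Fb ->
  forall i j k l : nat, (1 <= i)%N -> (j <= n)%N -> (l <= n)%N ->
  (i < j)%N -> (k < l)%N -> (i <= k)%N ->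
  let Eij := Eroot E i j in
  let Ekl := Eroot E k l in
  [/\ ((i < j < k)%N && (k < l)%N) || ((i < k < l)%N && (l < j)%N) ->
        Eij * Ekl = Ekl * Eij,
      (i < j)%N && (j == k) && (k < l)%N ->
        Eij * Ekl = qv^-1 *: (Ekl * Eij) - Eroot E i l,
      ((i == k) && (k < j < l)%N) || ((i < k < j)%N && (j == l)) ->
        Eij * Ekl = qv *: (Ekl * Eij)
    & (i < k < j)%N && (j < l)%N ->
        Eij * Ekl = Ekl * Eij + (qv - qv^-1) *: (Eroot E i l * Eroot E k j)].
Proof.
move=> H i j k l hi hjn hln hij hkl hik Eij Ekl; rewrite /Eij /Ekl.
have HF : farP n E.
  move=> a b ha hb hab.
  have hor : (a.+1 < b)%N || (b.+1 < a)%N by rewrite hab.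
  by have [h _ _ _] := qq5_far H ha hb hor.
have HS1 : s1P n E.
  move=> a ha han; apply: serre_l qv_neq0 _.
  have h1 : (1 <= a < n)%N by lia.
  have h2 : (1 <= a.+1 < n)%N by lia.
  have h3 : (a == a.+2) || (a.+1 == a.+1) by rewrite eqxx orbT.
  have [hE _] := qq6 H h1 h2 h3.
  by have := hE (E a.+1) (or_introl erefl); rewrite !expr2 !mulrA.
have HS2 : s2P n E.
  move=> a ha han; apply: serre_r qv_neq0 _.
  have h1 : (1 <= a.+1 < n)%N by lia.
  have h2 : (1 <= a < n)%N by lia.
  have h3 : (a.+1 == a.+1) || (a == a.+2) by rewrite eqxx.
  have [hE _] := qq6 H h1 h2 h3.
  by have := hE (E a) (or_introl erefl); rewrite !expr2 !mulrA.
split.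
- case/orP => /andP [/andP [h1 h2] h3].
  + by apply: (FarR HF); lia.
  + have hW : Eroot E i l = fb qv (Eroot E i k) (Eroot E k l) by apply: (Assoc HF); lia.
    have hU : Eroot E k j = fb qv (Eroot E k l) (Eroot E l j) by apply: (Assoc HF); lia.
    have hT1 : Eroot E i j = fb qv (Eroot E i l) (Eroot E l j) by apply: (Assoc HF); lia.
    have hT2 : Eroot E i j = fb qv (Eroot E i k) (Eroot E k j) by apply: (Assoc HF); lia.
    have hWY : qc qv (Eroot E i l) (Eroot E k l) by apply: (C3b HF HS1 HS2); lia.
    have hYU : qc qv (Eroot E k l) (Eroot E k j) by apply: (C3a HF HS1 HS2); lia.
    by have [-> _] := G4 qv_neq0 qv2_neq0 hW hU hT1 hT2 hWY hYU.
- move=> /andP [/andP [h1 /eqP h2] h3]; subst k.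
  rewrite [Eroot E i l](Assoc HF (b:=j)); try lia.
  rewrite /fb; lsolve_g Qv.
- case/orP => /andP [h1 h2].
  + move/eqP: h1 => h1; subst k; apply: (C3a HF HS1 HS2); lia.
  + move/eqP: h2 => h2; subst l; apply: (C3b HF HS1 HS2); lia.
- move=> /andP [/andP [h1 h2] h3].
  have hW : Eroot E i j = fb qv (Eroot E i k) (Eroot E k j) by apply: (Assoc HF); lia.
  have hU : Eroot E k l = fb qv (Eroot E k j) (Eroot E j l) by apply: (Assoc HF); lia.
  have hT1 : Eroot E i l = fb qv (Eroot E i j) (Eroot E j l) by apply: (Assoc HF); lia.
  have hT2 : Eroot E i l = fb qv (Eroot E i k) (Eroot E k l) by apply: (Assoc HF); lia.
  have hWY : qc qv (Eroot E i j) (Eroot E k j) by apply: (C3b HF HS1 HS2); lia.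
  have hYU : qc qv (Eroot E k j) (Eroot E k l) by apply: (C3a HF HS1 HS2); lia.
  have [_ hc] := G4 qv_neq0 qv2_neq0 hW hU hT1 hT2 hWY hYU.
  by rewrite -hc addrC subrK.
Qed.
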